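(* Let $n\ge1$ and let $T\in\mathcal{L}(\mathcal{H})$ be an $n$-EP operator. Then: (1) if $M$ is a closed subspace of $\mathcal{H}$ reducing $T$, then the restriction $T|_M$ (as an operator on $M$) is $n$-EP; (2) if $S=U^*TU$ for some unitary $U\in\mathcal{L}(\mathcal{H})$, then $S$ is $n$-EP.
   Context: $\mathcal{H}$ is a Hilbert space, $\mathcal{L}(\mathcal{H})$ the bounded operators on it. A closed subspace $M$ reduces $T$ if $T(M)\subset M$ and $T^*(M)\subset M$. For $T$ with closed range, $T^\dagger$ is its Moore–Penrose inverse (unique solution of $TT^\dagger T=T$, $T^\dagger TT^\dagger=T^\dagger$, $(T^\dagger T)^*=T^\dagger T$, $(TT^\dagger)^*=TT^\dagger$). For $n\ge1$, $T$ is $n$-EP if $T$ has closed range and $T^nT^\dagger=T^\dagger T^n$. *)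

(* Defs.v *)
From HB Require Import structures.
From mathcomp Require Import all_boot all_order all_algebra.
From mathcomp Require Import reals.
From mathcomp Require Import complex.
Set Implicit Arguments. Unset Strict Implicit. Unset Printing Implicit Defensive.
Import Order.TTheory GRing.Theory Num.Theory.
Local Open Scope ring_scope.

(* Complex Hilbert space H : a C-vector space with an inner product ip
   (linear in the first argument, conjugate-linear in the second) whose
   induced norm is complete. *)
Section Hilbert.
Variable R : realType.
Variable H : lmodType R[i].
Variable ip : H -> H -> R[i].

Definition inner_product_axioms : Prop :=
  [/\ forall (a : R[i]) (x y z : H), ip (a *: x + y) z = a * ip x z + ip y z,
      forall x y : H, ip y x = (ip x y)^*,
      forall x : H, 0 <= ip x x
    & forall x : H, ip x x = 0 -> x = 0].

Definition hnorm (x : H) : R := Num.sqrt (complex.Re (ip x x)).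

Definition cauchy_seq (u : nat -> H) : Prop :=
  forall eps : R, 0 < eps -> exists N : nat,
    forall m k : nat, (N <= m)%N -> (N <= k)%N -> hnorm (u m - u k) < eps.

Definition converges_to (u : nat -> H) (l : H) : Prop :=
  forall eps : R, 0 < eps -> exists N : nat,
    forall m : nat, (N <= m)%N -> hnorm (u m - l) < eps.

Definition complete_space : Prop :=
  forall u : nat -> H, cauchy_seq u -> exists l : H, converges_to u l.

Definition hilbert_space : Prop := inner_product_axioms /\ complete_space.

Definition closed_set (A : H -> Prop) : Prop :=
  forall x : H, (forall eps : R, 0 < eps -> exists a : H, A a /\ hnorm (x - a) < eps) -> A x.

Definition linear_subspace (M : H -> Prop) : Prop :=
  M 0 /\ forall (a : R[i]) (x y : H), M x -> M y -> M (a *: x + y).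

Definition closed_subspace (M : H -> Prop) : Prop :=
  linear_subspace M /\ closed_set M.

(* Operators on a closed subspace M of H, represented by maps H -> H that
   leave M invariant; only their values on M matter. With M = the whole
   space this is exactly L(H). *)
Definition bounded_op_on (M : H -> Prop) (T : H -> H) : Prop :=
  [/\ forall x, M x -> M (T x),
      forall (a : R[i]) (x y : H), M x -> M y -> T (a *: x + y) = a *: T x + T y
    & exists c : R, forall x, M x -> hnorm (T x) <= c * hnorm x].

Definition whole : H -> Prop := fun _ => True.

Definition bounded_op (T : H -> H) : Prop := bounded_op_on whole T.

Definition is_adjoint (T S : H -> H) : Prop :=
  forall x y : H, ip (T x) y = ip x (S y).

Definition reduces (M : H -> Prop) (T : H -> H) : Prop :=
  (forall x, M x -> M (T x)) /\
  exists S : H -> H, is_adjoint T S /\ forall x, M x -> M (S x).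

Definition closed_range_on (M : H -> Prop) (T : H -> H) : Prop :=
  closed_set (fun y => exists x, M x /\ y = T x).

Definition selfadjoint_on (M : H -> Prop) (P : H -> H) : Prop :=
  forall x y, M x -> M y -> ip (P x) y = ip x (P y).

Definition MP_inverse_on (M : H -> Prop) (T X : H -> H) : Prop :=
  [/\ bounded_op_on M X,
      forall x, M x -> T (X (T x)) = T x,
      forall x, M x -> X (T (X x)) = X x,
      selfadjoint_on M (fun x => X (T x))
    & selfadjoint_on M (fun x => T (X x))].

(* T|_M is n-EP : closed range and T^n T^† = T^† T^n on M
   (T^† is unique, so "some MP inverse commutes" = "the MP inverse commutes") *)
Definition nEP_on (M : H -> Prop) (n : nat) (T : H -> H) : Prop :=
  closed_range_on M T /\
  exists X : H -> H, MP_inverse_on M T X /\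
    forall x, M x -> iter n T (X x) = X (iter n T x).

Definition nEP (n : nat) (T : H -> H) : Prop := nEP_on whole n T.

End Hilbert.

(* Main.v *)
Require Import Defs.
From HB Require Import structures.
From mathcomp Require Import all_boot all_order all_algebra.
From mathcomp Require Import reals classical_sets.
From Stdlib Require Import ClassicalEpsilon.
From mathcomp Require Import complex.
From mathcomp Require Import lra ring.
Import Order.TTheory GRing.Theory Num.Theory.
Local Open Scope ring_scope.

Ltac nzs := repeat (apply/andP; split); apply/negP => /eqP; lra.

Section Ip.
Variable R : realType.
Variable H : lmodType R[i].
Variable ip : H -> H -> R[i].
Hypothesis hip : inner_product_axioms ip.

Lemma ReJ (z : R[i]) : complex.Re (z^*) = complex.Re z.
Proof. by case: z. Qed.
Lemma ImJ (z : R[i]) : complex.Im (z^*) = - complex.Im z.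
Proof. by case: z. Qed.

Lemma ReD (a b : R[i]) : complex.Re (a + b) = complex.Re a + complex.Re b.
Proof. by case: a; case: b. Qed.
Lemma ReN (a : R[i]) : complex.Re (- a) = - complex.Re a.
Proof. by case: a. Qed.
Lemma ipDl x y z : ip (x + y) z = ip x z + ip y z.
Proof. case: hip => h _ _ _. by have := h 1 x y z; rewrite scale1r mul1r. Qed.
Lemma ip0l z : ip 0 z = 0.
Proof. apply/eqP; rewrite -(addrI (ip 0 z) (_ : ip 0 z + ip 0 z = ip 0 z + 0)) //.
by rewrite -ipDl !addr0. Qed.
Lemma ipZl a x z : ip (a *: x) z = a * ip x z.
Proof. case: hip => h _ _ _. by rewrite -[a *: x]addr0 h ip0l addr0. Qed.
Lemma ipNl x z : ip (- x) z = - ip x z.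
Proof. by rewrite -scaleN1r ipZl mulN1r. Qed.
Lemma ipBl x y z : ip (x - y) z = ip x z - ip y z.
Proof. by rewrite ipDl ipNl. Qed.
Lemma ipC x y : ip y x = (ip x y)^*.
Proof. case: hip => _ h _ _; exact: h. Qed.
Lemma ipDr x y z : ip z (x + y) = ip z x + ip z y.
Proof. by rewrite [LHS]ipC ipDl rmorphD [ip z x]ipC [ip z y]ipC. Qed.
Lemma ip0r z : ip z 0 = 0.
Proof. by rewrite ipC ip0l conjC0. Qed.
Lemma ipZr a x z : ip z (a *: x) = a^* * ip z x.
Proof. by rewrite [LHS]ipC ipZl rmorphM [ip z x]ipC. Qed.
Lemma ipNr x z : ip z (- x) = - ip z x.
Proof. by rewrite [LHS]ipC ipNl rmorphN [ip z x]ipC. Qed.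
Lemma ipBr x y z : ip z (x - y) = ip z x - ip z y.
Proof. by rewrite ipDr ipNr. Qed.
Lemma ip_eq0 x : ip x x = 0 -> x = 0.
Proof. case: hip => _ _ _ h; exact: h. Qed.

Definition rp x y := complex.Re (ip x y).
Definition q x := rp x x.

Lemma ipxx x : ip x x = (q x)%:C%C.
Proof. case: hip => _ _ h _. move: (h x); rewrite /q /rp.
case: (ip x x) => a b; rewrite lecE /= => /andP[/eqP -> _]. by []. Qed.
Lemma q_ge0 x : 0 <= q x.
Proof. case: hip => _ _ h _. move: (h x); rewrite /q /rp.
case: (ip x x) => a b; rewrite lecE /= => /andP[_ ->] //. Qed.
Lemma q_eq0 x : q x = 0 -> x = 0.
Proof. move=> h; apply: ip_eq0; rewrite ipxx h; reflexivity. Qed.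
Lemma rpC x y : rp y x = rp x y.
Proof. by rewrite /rp ipC ReJ. Qed.
Lemma rpDl x y z : rp (x + y) z = rp x z + rp y z.
Proof. by rewrite /rp ipDl ReD. Qed.
Lemma rpDr x y z : rp z (x + y) = rp z x + rp z y.
Proof. by rewrite /rp ipDr ReD. Qed.
Lemma rpNl x z : rp (- x) z = - rp x z.
Proof. by rewrite /rp ipNl ReN. Qed.
Lemma rpNr x z : rp z (- x) = - rp z x.
Proof. by rewrite /rp ipNr ReN. Qed.
Lemma rpZl (r : R) x z : rp (r%:C%C *: x) z = r * rp x z.
Proof. rewrite /rp ipZl. case: (ip x z) => a b /=. by rewrite mul0r subr0. Qed.
Lemma rpZr (r : R) x z : rp z (r%:C%C *: x) = r * rp z x.
Proof. by rewrite rpC rpZl rpC. Qed.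

Lemma qD x y : q (x + y) = q x + 2 * rp x y + q y.
Proof. rewrite /q rpDl !rpDr (rpC y x). by rewrite mulr2n mulrDl mul1r !addrA. Qed.
Lemma qN x : q (- x) = q x.
Proof. by rewrite /q rpNl rpNr opprK. Qed.
Lemma qB x y : q (x - y) = q x - 2 * rp x y + q y.
Proof. by rewrite qD rpNr qN mulrN. Qed.
Lemma qZ (r : R) x : q (r%:C%C *: x) = r ^+ 2 * q x.
Proof. by rewrite /q rpZl rpZr mulrA expr2. Qed.
Lemma parallelogram x y : q (x + y) + q (x - y) = 2 * q x + 2 * q y.
Proof. rewrite qD qB. by rewrite -[2]/(1+1) !mulrDl !mul1r; lra. Qed.

Lemma Re_i_eq0 (z : R[i]) : complex.Re z = 0 -> complex.Re ('i%C * z) = 0 -> z = 0.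
Proof. case: z => a b /= -> . rewrite !mul0r mul1r sub0r => /eqP; rewrite oppr_eq0 => /eqP ->. reflexivity. Qed.

Lemma hnormE x : hnorm ip x = Num.sqrt (q x).
Proof. by []. Qed.

Lemma hnorm_lt x eps : 0 < eps -> q x < eps ^+ 2 -> hnorm ip x < eps.
Proof. move=> he hq. rewrite hnormE -(ger0_norm (ltW he)) -sqrtr_sqr ltr_sqrt //.
exact: exprn_gt0. Qed.

Lemma lt_hnorm x eps : hnorm ip x < eps -> q x < eps ^+ 2.
Proof. rewrite hnormE => h. rewrite -(sqr_sqrtr (q_ge0 x)).
have h0 := sqrtr_ge0 (q x). rewrite !expr2; nra.
Qed.

Section Proj.
Hypothesis hc : complete_space ip.
Variable M : H -> Prop.
Hypothesis hM : closed_subspace ip M.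

Lemma M0 : M 0. Proof. by case: hM => [[]]. Qed.
Lemma MZD a x y : M x -> M y -> M (a *: x + y).
Proof. by case: hM => [[_ h] _]; apply: h. Qed.
Lemma MD x y : M x -> M y -> M (x + y).
Proof. by move=> hx hy; have := MZD 1 _ _ hx hy; rewrite scale1r. Qed.
Lemma MZ a x : M x -> M (a *: x).
Proof. by move=> hx; have := MZD a _ _ hx M0; rewrite addr0. Qed.
Lemma MN x : M x -> M (- x).
Proof. by move=> hx; rewrite -scaleN1r; apply: MZ. Qed.
Lemma MB x y : M x -> M y -> M (x - y).
Proof. by move=> hx hy; apply: MD => //; apply: MN. Qed.

Lemma conv_q (u : nat -> H) l : converges_to ip u l ->
  forall s, 0 < s -> exists N, forall k, (N <= k)%N -> q (u k - l) < s.
Proof.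
move=> hu s hs. have hs' : 0 < Num.sqrt s by rewrite sqrtr_gt0.
case: (hu _ hs') => N hN; exists N => k hk.
have := lt_hnorm _ _ (hN k hk). by rewrite sqr_sqrtr // ltW.
Qed.

Lemma key_ineq a b t : 0 < t -> q (a + b) <= (1 + t) * q a + (1 + t^-1) * q b.
Proof.
move=> ht. rewrite qD.
have h0 := q_ge0 (t%:C%C *: a - b).
rewrite qB qZ rpZl in h0.
have : 2 * rp a b <= t * q a + t^-1 * q b.
  rewrite -(ler_pM2l ht).
  have -> : t * (t * q a + t^-1 * q b) = t ^+ 2 * q a + q b.
    by field; rewrite gt_eqF.
  lra.
lra.
Qed.

Lemma proj_exists w : exists m, M m /\ forall y, M y -> ip y (w - m) = 0.
Proof.
pose E := fun r : R => exists y, M y /\ r = q (w - y).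
have hlb : has_lbound E by exists 0 => r [y [_ ->]]; exact: q_ge0.
have hne : nonempty E by exists (q (w - 0)), 0; split => //; exact: M0.
pose d := inf E.
have hd : forall y, M y -> d <= q (w - y).
  by move=> y hy; apply: (ge_inf hlb); exists y.
have d0 : 0 <= d by apply: lb_le_inf => // r [y [_ ->]]; exact: q_ge0.
pose e (k : nat) : R := (k.+1%:R)^-1.
have e0 : forall k, 0 < e k by move=> k; rewrite /e invr_gt0 ltr0Sn.
have e1 : forall k, e k <= 1 by move=> k; rewrite /e invf_le1 ?ltr0Sn // ler1n.
have emon : forall j k, (j <= k)%N -> e k <= e j.
  move=> j k hjk; rewrite /e lef_pV2 ?posrE ?ltr0Sn // ler_nat ltnS //.
have hs : forall k, exists y, M y /\ q (w - y) < d + e k.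
  move=> k. have : d < d + e k by rewrite ltrDl.
  case/(inf_lt hne) => r [y [hy ->]] hr. by exists y.
clearbody d.
pose y k := proj1_sig (constructive_indefinite_description _ (hs k)).
have hy : forall k, M (y k) /\ q (w - y k) < d + e k.
  by move=> k; rewrite /y; case: constructive_indefinite_description.
have hcau : forall j k, q (y j - y k) <= 2 * e j + 2 * e k.
  move=> j k. case: (hy j) => hyj hqj. case: (hy k) => hyk hqk.
  pose mid := (2^-1 : R)%:C%C *: (y j + y k).
  have hmid : M mid by apply: MZ; apply: MD.
  have hdm := hd _ hmid.
  have hab : (w - y j) + (w - y k) = (2 : R)%:C%C *: (w - mid).
    rewrite /mid scalerBr scalerA -rmorphM mulfV ?pnatr_eq0 // rmorph1 scale1r.
    rewrite -[2]/(1 + 1 : R) rmorphD rmorph1 scalerDl scale1r opprD !addrA.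
    congr (_ - _). by rewrite addrAC.
  have hpar := parallelogram (w - y j) (w - y k).
  rewrite hab qZ in hpar.
  have -> : y j - y k = - ((w - y j) - (w - y k)).
    by rewrite opprB opprB addrC addrA [RHS]addrC !addrA addNr add0r.
  rewrite qN. have hq0 := q_ge0 (w - mid).
  have : 4 * d <= 2 ^+ 2 * q (w - mid) by rewrite expr2; lra.
  lra.
have hcs : cauchy_seq ip y.
  move=> eps heps.
  have he2 : 0 < eps ^+ 2 by exact: exprn_gt0.
  pose N := Num.bound (4 / eps ^+ 2).
  exists N => j k hj hk. apply: hnorm_lt => //.
  have hN : 4 / eps ^+ 2 < N%:R by apply: archi_boundP; apply: divr_ge0 => //; exact: ltW.
  have hN' : 4 < N.+1%:R * eps ^+ 2.
    rewrite ltr_pdivrMr // in hN.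
    have : N%:R <= N.+1%:R :> R by rewrite ler_nat.
    nra.
  have heN : e N * 4 < eps ^+ 2.
    rewrite /e -(ltr_pM2l (ltr0Sn _ N)) mulrA mulfV ?pnatr_eq0 // mul1r mulrC.
    by rewrite mulrC.
  have := hcau j k. have := emon _ _ hj. have := emon _ _ hk. lra.
case: (hc _ hcs) => m hm.
have hMm : M m.
  case: hM => _ hcl. apply: hcl => eps heps.
  case: (hm _ heps) => N hN. exists (y N); split; first by case: (hy N).
  by rewrite hnormE -qN opprB -hnormE; apply: (hN N).
have hmin : q (w - m) <= d.
  apply/ler_addgt0Pr => eps heps.
  pose t := eps / (3 * (d + 1)).
  have ht : 0 < t by apply: divr_gt0 => //; lra.
  have htd : t * (d + 1) = eps / 3.
    by rewrite /t; field; nzs.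
  pose s := eps / (3 * (1 + t^-1)).
  have hti : 0 < t^-1 by rewrite invr_gt0.
  have hs0 : 0 < s by apply: divr_gt0 => //; lra.
  have hst : (1 + t^-1) * s = eps / 3.
    by rewrite /s; field; nzs.
  case: (conv_q _ _ hm _ hs0) => N1 hN1.
  pose N2 := Num.bound (3 / eps).
  have hN2 : e N2 <= eps / 3.
    have h3 : 3 / eps < N2%:R by apply: archi_boundP; apply: divr_ge0 => //; lra.
    rewrite ltr_pdivrMr // in h3.
    have hK : N2%:R <= N2.+1%:R :> R by rewrite ler_nat.
    have hinv : e N2 * N2.+1%:R = 1 by rewrite /e mulVf ?pnatr_eq0.
    have := e0 N2. nra.
  pose k := maxn N1 N2.
  have hk1 : (N1 <= k)%N by rewrite leq_maxl.
  have hk2 : (N2 <= k)%N by rewrite leq_maxr.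
  have hB := hN1 k hk1. have hB0 := q_ge0 (y k - m).
  have hA := (hy k).2. have hA0 := q_ge0 (w - y k).
  have hek := emon _ _ hk2. have he1 := e1 k.
  have hkey := key_ineq (w - y k) (y k - m) t ht.
  have -> : w - m = (w - y k) + (y k - m) by rewrite addrA subrK.
  have h1 : t * q (w - y k) <= t * (d + 1).
    rewrite ler_pM2l //. lra.
  have h2 : (1 + t^-1) * q (y k - m) <= eps / 3.
    rewrite -hst ler_pM2l; [exact: ltW | lra].
  lra.
exists m; split => // z hz.
have hvar : forall x, M x -> rp (w - m) x = 0.
  move=> x hx. set c := rp (w - m) x.
  have hqx := q_ge0 x.
  pose t := c / (q x + 1).
  have hMt : M (m + t%:C%C *: x) by apply: MD => //; apply: MZ.
  have := hd _ hMt.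
  have -> : w - (m + t%:C%C *: x) = (w - m) - t%:C%C *: x by rewrite opprD addrA.
  rewrite qB qZ rpZr => hle.
  have hle' : 2 * (t * c) <= t ^+ 2 * q x by lra.
  have hq1 : 0 < q x + 1 by lra.
  have hc2 : 2 * c ^+ 2 * (q x + 1) <= c ^+ 2 * q x.
    have := hle'; rewrite -(ler_pM2l (exprn_gt0 2 hq1)).
    have -> : (q x + 1) ^+ 2 * (2 * (t * c)) = 2 * c ^+ 2 * (q x + 1).
      rewrite /t; field; lra.
    have -> : (q x + 1) ^+ 2 * (t ^+ 2 * q x) = c ^+ 2 * q x.
      rewrite /t; field; lra.
    done.
  have hc0 : c ^+ 2 <= 0 by nra.
  have : c ^+ 2 == 0 by rewrite eq_le hc0 sqr_ge0.
  by rewrite expf_eq0 /= => /eqP.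
apply: Re_i_eq0.
  by rewrite -/(rp z (w - m)) rpC; apply: hvar.
have hiz : M ('i%C *: z) by apply: MZ.
by rewrite -ipZl -/(rp _ _) rpC; apply: hvar.
Qed.
End Proj.

Lemma lin_whole (f : H -> H) :
  (forall (a : R[i]) (x y : H), whole x -> whole y -> f (a *: x + y) = a *: f x + f y) ->
  f 0 = 0 /\ forall x y, f (x - y) = f x - f y.
Proof.
move=> hf. have f0 : f 0 = 0.
  have := hf 1 0 0 I I; rewrite !scale1r addr0 => h.
  by apply: (@addrI _ (f 0)); rewrite addr0 -h.
split => // x y. have := hf (-1) y x I I. by rewrite !scaleN1r addrC => ->; rewrite addrC.
Qed.

Lemma part1 (hc : complete_space ip) n T (hT : bounded_op ip T) (hEP : nEP ip n T)
  M (hM : closed_subspace ip M) (hr : reduces ip M T) : nEP_on ip M n T.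
Proof.
case: hEP => hcr [X [[hXb hTXT hXTX hsa1 hsa2] hcom]].
case: hXb => _ hXlin hXbd.
case: hT => _ hTlin _.
case: (lin_whole _ hXlin) => X0 XB.
case: (lin_whole _ hTlin) => T0 TB.
have TD : forall x y, T (x + y) = T x + T y.
  by move=> x y; have := hTlin 1 x y I I; rewrite !scale1r.
case: hr => hTM [S [hadj hSM]].
have hXM : forall x, M x -> M (X x).
  move=> x hx. set w := X x.
  case: (proj_exists hc M hM w) => m [hm hperp].
  set v := w - m.
  have hw : w = m + v by rewrite /v addrC subrK.
  have hperp' : forall y, M y -> ip v y = 0.
    by move=> y hy; rewrite ipC hperp // conjC0.
  have hTv : forall y, M y -> ip y (T v) = 0.
    move=> y hy. rewrite ipC hadj ipC hperp; last exact: hSM.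
    by rewrite !conjC0.
  have hran : forall z, ip (T z) (x - T w) = 0.
    move=> z. rewrite -(hTXT z I).
    have := hsa2 (T z) (x - T w) I I => /= ->.
    rewrite XB TB /w (hTXT (X x) I) subrr. exact: ip0r.
  have Tv0 : T v = 0.
    apply: ip_eq0. have := hran v. rewrite hw TD opprD addrA ipBr.
    rewrite [ip (T v) (x - T m)]ipC hTv ?conjC0 ?sub0r; last first.
      by apply: MB => //; apply: hTM.
    by move/eqP; rewrite oppr_eq0 => /eqP.
  have v0 : v = 0.
    apply: ip_eq0. rewrite {1}/v ipBl (hperp m hm) subr0.
    have -> : w = X (T w) by rewrite /w hXTX.
    have := hsa1 w v I I => /= ->.
    by rewrite Tv0 X0 ip0r.
  by rewrite hw v0 addr0.
split.
  move=> y hy.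
  have hyr : exists x, whole x /\ y = T x.
    apply: hcr => eps heps. case: (hy eps heps) => a [[x [hx ->]] ha].
    by exists (T x); split => //; exists x.
  have hyM : M y.
    case: hM => _ hcl. apply: hcl => eps heps.
    case: (hy eps heps) => a [[x [hx ->]] ha]. by exists (T x); split => //; apply: hTM.
  case: hyr => x [_ hyx]. exists (X y); split; first exact: hXM.
  by rewrite hyx hTXT.
exists X; split; last by move=> x _; apply: hcom.
split => //.
- split => //.
  + by move=> a x y _ _; apply: hXlin.
  + case: hXbd => c hc'. by exists c => x _; apply: hc'.
- by move=> x _; apply: hTXT.
- by move=> x _; apply: hXTX.
- by move=> x y _ _; apply: hsa1.
- by move=> x y _ _; apply: hsa2.
Qed.

Lemma part2 n T (hT : bounded_op ip T) (hEP : nEP ip n T) U Us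
  (hU : bounded_op ip U) (hadj : is_adjoint ip U Us)
  (hUK : forall x, Us (U x) = x) (hUsK : forall x, U (Us x) = x) :
  nEP ip n (fun x => Us (T (U x))).
Proof.
case: hEP => hcr [X [[hXb hTXT hXTX hsa1 hsa2] hcom]].
case: hXb => _ hXlin [c hc].
case: hU => _ hUlin _.
case: (lin_whole _ hUlin) => U0 UB.
have Uslin : forall (a : R[i]) x y, Us (a *: x + y) = a *: Us x + Us y.
  move=> a x y. rewrite -{1}(hUsK x) -{1}(hUsK y).
  have := hUlin a (Us x) (Us y) I I => <-. by rewrite hUK.
have qU : forall x, q (U x) = q x.
  by move=> x; rewrite /q /rp hadj hUK.
have qUs : forall x, q (Us x) = q x.
  by move=> x; rewrite -qU hUsK.
have ipUs : forall a b, ip (Us a) b = ip a (U b).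
  by move=> a b; rewrite ipC -hadj -ipC.
have hiter : forall k x, iter k (fun x => Us (T (U x))) x = Us (iter k T (U x)).
  elim=> [|k IH] x /=; first by rewrite hUK.
  by rewrite IH hUsK.
split.
  move=> y hy.
  have hyr : exists x, whole x /\ U y = T x.
    apply: hcr => eps heps. case: (hy eps heps) => a [[x [_ ->]] ha].
    exists (T (U x)); split; first by exists (U x).
    by rewrite -[T (U x)]hUsK -UB hnormE qU -hnormE.
  case: hyr => x [_ hx]. exists (Us x); split => //.
  by rewrite hUsK -hx hUK.
exists (fun x => Us (X (U x))); split.
  split => /=.
  - split => //.
    + move=> a x y _ _. by rewrite hUlin // hXlin // Uslin.
    + exists c => x _. have := hc (U x) I. by rewrite !hnormE qUs qU.
  - by move=> x _; rewrite !hUsK hTXT.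
  - by move=> x _; rewrite !hUsK hXTX.
  - move=> x y _ _ /=. rewrite hUsK ipUs.
    have := hsa1 (U x) (U y) I I => /= ->.
    by rewrite hadj hUsK.
  - move=> x y _ _ /=. rewrite hUsK ipUs.
    have := hsa2 (U x) (U y) I I => /= ->.
    by rewrite hadj hUsK.
move=> x _ /=. by rewrite !hiter !hUsK hcom.
Qed.
End Ip.

Theorem mainTheorem7 (R : realType) (H : lmodType R[i]) (ip : H -> H -> R[i])
  (hH : hilbert_space ip) (n : nat) (hn : (1 <= n)%N) (T : H -> H)
  (hT : bounded_op ip T) (hEP : nEP ip n T) :
  (forall M : H -> Prop, closed_subspace ip M -> reduces ip M T ->
      nEP_on ip M n T)
  /\
  (forall U Ustar : H -> H, bounded_op ip U -> is_adjoint ip U Ustar ->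
      (forall x, Ustar (U x) = x) -> (forall x, U (Ustar x) = x) ->
      nEP ip n (fun x => Ustar (T (U x)))).
Proof.
case: hH => hip hc. split.
  move=> M hM hr. exact: (part1 _ _ _ hip hc _ _ hT hEP _ hM hr).
move=> U Us hU hadj hK1 hK2. exact: (part2 _ _ _ hip _ _ hT hEP _ _ hU hadj hK1 hK2).
Qed.
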